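(* Let $x$ be an allocation rule and suppose Assumptions D and X hold. (The following is part (ii) of the proposition; part (i) is attributed to prior work.) Suppose $\bar t$ is a win-lose dependent transfer rule (for $x$) such that for every $i$ and $\theta\in\Theta$, $$\bar U_i^{\min}(\theta)=\int_{\underline\theta}^{\theta}X_i^{\min}(z)\,dz,$$ where $\bar U_i^{\min}$ denotes the interim worst-case utility under $(x,\bar t)$. Then $(x,\bar t)$ is feasible.
   Context: Let $\Theta=[\underline\theta,\bar\theta]\subset\mathbb{R}$ with $0<\underline\theta<\bar\theta$, with Borel $\sigma$-algebra $\mathcal{B}$; ''$\sigma$-algebra'' always means a sub-$\sigma$-algebra of $\mathcal{B}$, and $\Delta(\Theta,\mathcal{A})$ is the set of probability measures on $(\Theta,\mathcal{A})$; $P_{\mathcal{E}}$ denotes the restriction of $P$ to $\mathcal{E}$. A divergence $D$ assigns to each pair $Q,P$ of probability measures on a common $\sigma$-algebra a number $D(Q\|P)\in[0,\infty]$. Assumption D: for every $\sigma$-algebra $\mathcal{A}$ and $P,Q\in\Delta(\Theta,\mathcal{A})$: (D1) $D(Q\|P)=0$ if $Q=P$; (D2) if $Q\ll P$ and $dQ/dP$ is bounded, $\epsilon\mapsto D(\epsilon Q+(1-\epsilon)P\|P)$ is continuous on $[0,1]$; (D3) $D(Q\|P)<\infty$ implies $Q\ll P$; (D4) $D(Q_{\mathcal{E}}\|P_{\mathcal{E}})\le D(Q\|P)$ for every sub-$\sigma$-algebra $\mathcal{E}\subset\mathcal{A}$; (D5) $D(Q_{\mathcal{E}}\|P_{\mathcal{E}})=D(Q\|P)$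 if $dQ_{\mathcal{E}}/dP_{\mathcal{E}}=dQ/dP$ $P$-a.e. Fix an atomless $P\in\Delta(\Theta,\mathcal{B})$ and $\eta>0$. Two bidders $i\in\{1,2\}$. An allocation rule is a bounded measurable $x=(x_1,x_2):\Theta^2\to\mathbb{R}^2$ with $x_1(\theta,\theta')\ge0$, $x_2(\theta',\theta)\ge0$, $x_1(\theta,\theta')+x_2(\theta',\theta)\le1$; a transfer rule is a bounded measurable $t=(t_1,t_2):\Theta^2\to\mathbb{R}^2$. Define $X_i(\theta)=\int x_i(\theta,\theta')dP(\theta')$, $X_i^{\min}(\theta)=\inf_Q\{\int x_i(\theta,\theta')dQ(\theta'):D(Q\|P)\le\eta\}$, and for a transfer rule $t$, $U_i^{\min}(\theta)=\inf_Q\{\int[\theta x_i(\theta,\theta')-t_i(\theta,\theta')]dQ(\theta'):D(Q\|P)\le\eta\}$, $Q$ ranging over $\Delta(\Theta,\mathcal{B})$. $(x,t)$ is incentive compatible if for all $i,\theta$, $\theta\in\arg\max_{\hat\theta\in\Theta}\inf_Q\{\int[\theta x_i(\hat\theta,\theta')-t_i(\hat\theta,\theta')]dQ(\theta'):D(Q\|P)\le\eta\}$; individually rational if $U_i^{\min}(\theta)\ge0$ for all $i,\theta$; feasible if both. Assumption X: (i) $x_i(\theta,\theta')\in\{0,1\}$ for $\theta'\ne\theta$; (ii) $X_i(\theta)=1$ implies $\theta=\bar\theta$; (iii) $X_i^{\min}$ is non-decreasing. A transfer rule $t$ is win-lose dependent if there exist $t_i^w,t_i^l:\Theta\to\mathbb{R}$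 with $t_i(\theta,\theta')=t_i^w(\theta)x_i(\theta,\theta')+t_i^l(\theta)[1-x_i(\theta,\theta')]$ and $\theta-t_i^w(\theta)\ge-t_i^l(\theta)$ for all $i,\theta,\theta'$. *)

(* Defs.v *)
From HB Require Import structures.
From mathcomp Require Import all_boot all_order all_algebra.
From mathcomp Require Import all_classical all_reals all_analysis.
Set Implicit Arguments. Unset Strict Implicit. Unset Printing Implicit Defensive.
Import Order.TTheory GRing.Theory Num.Theory.
Import numFieldNormedType.Exports.
Local Open Scope classical_set_scope.
Local Open Scope ring_scope.

Definition Theta (R : realType) (a b : R) (hab : a <= b) : Type :=
  {x : R | a <= x <= b}.

Section Model.
Variables (R : realType) (a b : R) (hab : a <= b).
Local Notation Theta := (Theta hab).
HB.instance Definition _ := Choice.on Theta.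
Definition theta_lo : Theta := exist _ a (andb_true_intro (conj (lexx a) hab)).
HB.instance Definition _ := isPointed.Build Theta theta_lo.

Definition BorelT : set (set Theta) :=
  [set (@sval R _) @^-1` B | B in [set B : set R | @measurable _ (measurableTypeR R) B]].

Definition ThetaB := g_sigma_algebraType BorelT.

Definition subsigma (A : set (set Theta)) :=
  sigma_algebra setT A /\ A `<=` BorelT.

Local Open Scope ereal_scope.

(* A probability measure on (Theta, A), represented by its set function
   (only its values on A are meaningful). *)
Definition isProbOn (A : set (set Theta)) (mu : set Theta -> \bar R) :=
  [/\ mu set0 = 0, (forall X, A X -> 0 <= mu X),
      semi_sigma_additive (mu : set (g_sigma_algebraType A) -> \bar R)
    & mu setT = 1].

Definition abs_cont (A : set (set Theta)) (Q P : set Theta -> \bar R) :=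
  forall X, A X -> P X = 0 -> Q X = 0.

Definition is_density (A : set (set Theta)) (Q P : set Theta -> \bar R)
    (f : Theta -> R) :=
  [/\ measurable_fun setT (f : g_sigma_algebraType A -> R),
      (forall y, (0 <= f y)%R)
    & forall X, A X ->
        Q X = @integral _ (g_sigma_algebraType A) R P X (fun y => (f y)%:E)].

Definition mixture (e : R) (Q P : set Theta -> \bar R) : set Theta -> \bar R :=
  fun X => e%:E * Q X + (1 - e)%R%:E * P X.

(* A divergence: D A Q P stands for D(Q || P) with Q, P on (Theta, A). *)
Definition divergence_wd (D : set (set Theta) -> (set Theta -> \bar R) ->
    (set Theta -> \bar R) -> \bar R) :=
  (forall A Q P, subsigma A -> isProbOn A Q -> isProbOn A P -> 0 <= D A Q P)
  /\ (forall A Q Q' P P', subsigma A -> isProbOn A Q -> isProbOn A P ->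
        isProbOn A Q' -> isProbOn A P' ->
        (forall X, A X -> Q X = Q' X) -> (forall X, A X -> P X = P' X) ->
        D A Q P = D A Q' P').

Definition assumptionD (D : set (set Theta) -> (set Theta -> \bar R) ->
    (set Theta -> \bar R) -> \bar R) :=
  [/\
      (forall A P, subsigma A -> isProbOn A P -> D A P P = 0),
      (forall A Q P, subsigma A -> isProbOn A Q -> isProbOn A P ->
        abs_cont A Q P ->
        (exists f c, is_density A Q P f /\ forall y, (f y <= c)%R) ->
        {within `[0%R, 1%R], continuous (fun e : R => D A (mixture e Q P) P)}),
      (forall A Q P, subsigma A -> isProbOn A Q -> isProbOn A P ->
        D A Q P < +oo -> abs_cont A Q P),
      (forall A E Q P, subsigma A -> subsigma E -> E `<=` A ->
        isProbOn A Q -> isProbOn A P -> D E Q P <= D A Q P)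
    &
      (forall A E Q P, subsigma A -> subsigma E -> E `<=` A ->
        isProbOn A Q -> isProbOn A P ->
        (exists fA fE, [/\ is_density A Q P fA, is_density E Q P fE &
           exists N, [/\ A N, P N = 0 & forall y, ~ N y -> fA y = fE y]]) ->
        D E Q P = D A Q P)].

Definition atomless (P : set Theta -> \bar R) :=
  forall X, BorelT X -> 0 < P X ->
    exists Y, [/\ BorelT Y, Y `<=` X, 0 < P Y & P Y < P X].

(* Bidders are indexed by 'I_2; x i th th' is bidder i's allocation when
   bidder i reports th and the other bidder reports th'. *)
Definition bounded_measurable (f : 'I_2 -> Theta -> Theta -> R) :=
  (exists M : R, forall i th th', (`|f i th th'| <= M)%R) /\
  forall i, measurable_fun setT
    (fun p : ThetaB * ThetaB => f i p.1 p.2).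

Definition allocation_rule (x : 'I_2 -> Theta -> Theta -> R) :=
  bounded_measurable x /\
  forall th th', [/\ (0 <= x ord0 th th')%R, (0 <= x (lift ord0 ord0) th' th)%R
     & (x ord0 th th' + x (lift ord0 ord0) th' th <= 1)%R].

Definition transfer_rule (t : 'I_2 -> Theta -> Theta -> R) :=
  bounded_measurable t.

Section Mechanism.
Variables (D : set (set Theta) -> (set Theta -> \bar R) ->
    (set Theta -> \bar R) -> \bar R) (P : set Theta -> \bar R) (eta : R).

Definition EQ (Q : set Theta -> \bar R) (f : Theta -> R) : \bar R :=
  @integral _ ThetaB R Q setT (fun y => (f y)%:E).

Definition ambiguity : set (set Theta -> \bar R) :=
  [set Q | isProbOn BorelT Q /\ D BorelT Q P <= eta%:E].

Definition worst (f : Theta -> R) : \bar R :=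
  ereal_inf [set EQ Q f | Q in ambiguity].

Variables (x t : 'I_2 -> Theta -> Theta -> R).

Definition Xint (i : 'I_2) (th : Theta) : \bar R := EQ P (x i th).
Definition Xmin (i : 'I_2) (th : Theta) : \bar R := worst (x i th).

Definition Uhat (i : 'I_2) (th thh : Theta) : \bar R :=
  worst (fun th' => sval th * x i thh th' - t i thh th')%R.
Definition Umin (i : 'I_2) (th : Theta) : \bar R := Uhat i th th.

Definition incentive_compatible :=
  forall i th thh, Uhat i th thh <= Uhat i th th.
Definition individually_rational :=
  forall i th, 0 <= Umin i th.
Definition feasible := incentive_compatible /\ individually_rational.

Definition assumptionX :=
  [/\ (forall i th th', th' <> th -> x i th th' = 0%R \/ x i th th' = 1%R),
      (forall i th, Xint i th = 1 -> sval th = b)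
    & (forall i, {homo Xmin i : th th' / (sval th <= sval th')%R >-> th <= th'})].

Definition win_lose_dependent :=
  exists tw tl : 'I_2 -> Theta -> R,
    (forall i th th', t i th th' =
        (tw i th * x i th th' + tl i th * (1 - x i th th'))%R) /\
    (forall i th, (sval th - tw i th >= - tl i th)%R).

End Mechanism.
End Model.

(* Main.v *)
Require Import Defs.
From HB Require Import structures.
From mathcomp Require Import all_boot all_order all_algebra.
From mathcomp Require Import all_classical all_reals all_analysis.
From mathcomp Require Import lra ring measurable_realfun.
Set Implicit Arguments. Unset Strict Implicit. Unset Printing Implicit Defensive.
Import Order.TTheory GRing.Theory Num.Theory.
Import numFieldNormedType.Exports.
Local Open Scope classical_set_scope.
Local Open Scope ring_scope.

Import HBNNSimple.
Section Msr.
Variables (R : realType) (a b : R) (hab : a <= b).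

Lemma BorelT_sigma : sigma_algebra setT (@BorelT _ _ _ hab).
Proof.
have := sigma_algebra_preimage setT (@sval R (fun x => a <= x <= b))
  (sigma_algebra_measurable (measurableTypeR R)).
congr sigma_algebra.
apply/seteqP; split => _ [B mB <-]; exists B => //; by rewrite setTI.
Qed.

Lemma measB (X : set (ThetaB hab)) : measurable X = @BorelT _ _ _ hab X.
Proof. by rewrite measurable_g_measurableTypeE //; exact: BorelT_sigma. Qed.

Lemma integral_raw (m1 m2 : set (ThetaB hab) -> \bar R) D f :
  (forall A, measurable A -> m1 A = m2 A) ->
  @integral _ (ThetaB hab) R m1 D f = @integral _ (ThetaB hab) R m2 D f.
Proof.
move=> m12; rewrite /integral; congr (_ - _)%E; congr ereal_sup;
  apply/seteqP; split => _ [h hf <-]; exists h => //;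
  rewrite /sintegral; apply: eq_fsbigr => r _; rewrite m12 //.
all: exact: measurable_funPTI.
Qed.

Variables (Q : set (Theta hab) -> \bar R).

Definition Qm (hQ : isProbOn (@BorelT _ _ _ hab) Q) (X : set (ThetaB hab)) : \bar R :=
  if pselect (@BorelT _ _ _ hab X) then Q X else 0%E.

Variable hQ : isProbOn (@BorelT _ _ _ hab) Q.

Lemma Qm_eq X : measurable X -> Qm hQ X = Q X.
Proof. by rewrite measB /Qm; case: pselect. Qed.

Lemma Qm0 : Qm hQ set0 = 0%E.
Proof. rewrite Qm_eq //; by case: hQ. Qed.

Lemma Qm_ge0 X : (0 <= Qm hQ X)%E.
Proof. rewrite /Qm; case: pselect => // hX; by case: hQ => _ + _ _; apply. Qed.

Lemma Qm_ssa : semi_sigma_additive (Qm hQ).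
Proof.
move=> F mF tF mU.
have -> : (fun n => \sum_(0 <= i < n) Qm hQ (F i))%E = (fun n => \sum_(0 <= i < n) Q (F i))%E.
  by apply: funext => n; apply: eq_bigr => i _; rewrite Qm_eq.
rewrite Qm_eq //; case: hQ => _ _ + _; exact.
Qed.

HB.instance Definition _ := isMeasure.Build _ _ _ (Qm hQ) Qm0 Qm_ge0 Qm_ssa.

Lemma QmT : Qm hQ setT = 1%E.
Proof. rewrite Qm_eq //; by case: hQ. Qed.

Lemma QmT2 : (Qm hQ : {measure set (ThetaB hab) -> \bar R}) setT = 1%E.
Proof. exact: QmT. Qed.

Lemma EQ_Qm f : EQ Q f = (\int[Qm hQ]_(y in setT) (f y)%:E)%E.
Proof. by rewrite /EQ; apply: integral_raw => A mA; rewrite Qm_eq. Qed.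

End Msr.

Section EQs.
Variables (R : realType) (a b : R) (hab : a <= b).
Variables (Q : set (Theta hab) -> \bar R) (hQ : isProbOn (@BorelT _ _ _ hab) Q).

Lemma EQ_ge0 (f : Theta hab -> R) : (forall y, 0 <= f y) -> (0 <= EQ Q f)%E.
Proof. move=> f0; rewrite (EQ_Qm hQ); apply: integral_ge0 => y _; by rewrite lee_fin. Qed.

Lemma bdd_int (f : Theta hab -> R) M :
  measurable_fun setT (f : ThetaB hab -> R) -> (forall y, `|f y| <= M) ->
  (Qm hQ).-integrable setT (EFin \o f).
Proof.
move=> mf bf.
apply: measurable_bounded_integrable => //.
  by change (Qm hQ setT < +oo)%E; rewrite QmT ltry.
rewrite /bounded_near /=; exists M; split; first exact: num_real.
by move=> M1 hM1 y _; apply: le_trans (bf y) (ltW hM1).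
Qed.

Lemma EQ_affine (f : Theta hab -> R) M :
  measurable_fun setT (f : ThetaB hab -> R) -> (forall y, `|f y| <= M) ->
  exists r, EQ Q f = r%:E /\ forall k c, EQ Q (fun y => k * f y + c) = (k * r + c)%:E.
Proof.
move=> mf bf.
have fI := bdd_int mf bf.
have fin := integrable_fin_num measurableT fI.
exists (fine (\int[Qm hQ]_(y in setT) (f y)%:E)%E); rewrite (EQ_Qm hQ); split.
  by rewrite fineK.
move=> k c; rewrite (EQ_Qm hQ).
under eq_integral do rewrite EFinD EFinM.
rewrite integralD //.
- by rewrite integralZl // integral_cst // QmT2 mule1 EFinD EFinM fineK.
- exact: integrableZl.
- apply: (@bdd_int (fun _ => c) `|c|) => //.
Qed.
End EQs.

Section Inf.
Variables (R : realType) (I : Type) (S : set I) (r : I -> R).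

Lemma inf_affine_ub (k c m : R) :
  ereal_inf [set (r Q)%:E | Q in S] = m%:E ->
  (ereal_inf [set (k * r Q + c)%:E | Q in S] <= (k * m + c)%:E)%E.
Proof.
move=> hm; apply/lee_addgt0Pr => e e0.
pose e' := e / (`|k| + 1).
have k1 : 0 < `|k| + 1 by have := normr_ge0 k; lra.
have e'0 : 0 < e' by rewrite divr_gt0.
have ee : e' * (`|k| + 1) = e by rewrite divfK // gt_eqF.
have : (ereal_inf [set (r Q)%:E | Q in S] < (m + e')%:E)%E.
  by rewrite hm lte_fin ltrDl.
move=> /ereal_inf_lt[_ [Q SQ <-]]; rewrite lte_fin => hQ.
have mQ : m <= r Q.
  by rewrite -lee_fin -hm; apply: ereal_inf_lbound; exists Q.
apply: le_trans (ereal_inf_lbound _) _; first by exists Q.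
rewrite -EFinD lee_fin.
case: (leP 0 k) => hk.
  move: ee; rewrite ger0_norm // => ee; nra.
nra.
Qed.

Lemma inf_affine_lb (k c m : R) : 0 <= k ->
  (forall Q, S Q -> m <= r Q) ->
  ((k * m + c)%:E <= ereal_inf [set (k * r Q + c)%:E | Q in S])%E.
Proof.
move=> hk hm; apply/ereal_infP => _ [Q SQ <-]; rewrite lee_fin.
have := hm Q SQ; nra.
Qed.
End Inf.

Section Leb.
Variables (R : realType) (a b : R) (hab : a <= b) (H : Theta hab -> R).
Hypothesis Hmono : forall th th' : Theta hab, sval th <= sval th' -> H th <= H th'.
Hypothesis H0 : forall th, 0 <= H th.

Definition clamp (z : R) := Num.min (Num.max z a) b.

Lemma clamp_in z : a <= clamp z <= b.
Proof.
rewrite /clamp; apply/andP; split; last by rewrite ge_min lexx orbT.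
by rewrite le_min hab le_max lexx orbT.
Qed.

Lemma clampE z : a <= z <= b -> clamp z = z.
Proof.
by move=> /andP[h1 h2]; rewrite /clamp (max_idPl h1) (min_idPl h2).
Qed.

Lemma clamp_nd : {homo clamp : x y / x <= y}.
Proof.
move=> x y xy; rewrite /clamp; apply: le_min2 => //; exact: le_max2.
Qed.

Definition G (z : R) := H (insubd (theta_lo hab) (clamp z)).

Lemma val_insubd_in z : a <= z <= b -> sval (insubd (theta_lo hab) z) = z.
Proof. by move=> hz; rewrite (val_insubd (theta_lo hab) z) /= hz. Qed.

Lemma Gnd : {homo G : x y / x <= y}.
Proof.
move=> x y xy; apply: Hmono.
by rewrite !val_insubd_in ?clamp_in // clamp_nd.
Qed.

Lemma Gm : measurable_fun setT G.
Proof. apply: measurable_realfun.nondecreasing_measurable => //; exact: Gnd. Qed.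

Lemma GEm : measurable_fun [set: R] (EFin \o G).
Proof. by apply/measurable_realfun.measurable_EFinP; exact: Gm. Qed.

Lemma G_th (th : Theta hab) : G (sval th) = H th.
Proof.
rewrite /G clampE; last exact: (svalP th).
congr H; apply: val_inj => /=. by rewrite val_insubd_in //; exact: (svalP th).
Qed.

Lemma G0 z : (0 <= (G z)%:E)%E.
Proof. have := H0 (insubd (theta_lo hab) (clamp z)); by rewrite -lee_fin. Qed.

Lemma I_G s : s <= b ->
  (\int[lebesgue_measure]_(z in `[a, s]) (H (insubd (theta_lo hab) z))%:E =
   \int[lebesgue_measure]_(z in `[a, s]) (G z)%:E)%E.
Proof.
move=> sb; apply: eq_integral => z; rewrite inE /= in_itv /= => /andP[h1 h2].
by rewrite /G clampE // h1 /= (le_trans h2 sb).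
Qed.

Lemma Isplit s u : a <= s -> s <= u ->
  (\int[lebesgue_measure]_(z in `[a, u]) (G z)%:E =
   \int[lebesgue_measure]_(z in `[a, s]) (G z)%:E +
   \int[lebesgue_measure]_(z in `]s, u]) (G z)%:E)%E.
Proof.
move=> hs su.
rewrite (@itv_bndbnd_setU _ _ _ (BRight s)) ?bnd_simp //.
rewrite ge0_integral_setU //.
- exact: measurable_funS GEm.
- by move=> z _; exact: G0.
- apply/disj_setPS => z [] /=; rewrite !in_itv /= => /andP[_ h1] /andP[h2 _].
  by move: (lt_le_trans h2 h1); rewrite ltxx.
Qed.

Lemma Ibounds s u : s <= u ->
  (((u - s) * G s)%:E <= \int[lebesgue_measure]_(z in `]s, u]) (G z)%:E)%E /\
  (\int[lebesgue_measure]_(z in `]s, u]) (G z)%:E <= ((u - s) * G u)%:E)%E.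
Proof.
move=> su.
have cst_int c : (\int[lebesgue_measure]_(z in `]s, u]) (cst c%:E z) = ((u - s) * c)%:E)%E.
  rewrite integral_cst //.
  set L := (X in (_ * X)%E).
  have -> : L = (u - s)%:E.
    rewrite /L; apply: (eq_trans (lebesgue_measure_itv `]s, u])).
    rewrite /= lte_fin; case: ltP => h; first by rewrite EFinB.
    have -> : u = s by apply/eqP; rewrite eq_le su h.
    by rewrite subrr.
  by rewrite muleC -EFinM.
split.
- rewrite -cst_int; apply: ge0_le_integral => //.
  + by move=> z _; exact: G0.
  + exact: measurable_funS GEm.
  + by move=> z; rewrite /= in_itv /= => /andP[h1 _]; rewrite lee_fin Gnd // ltW.
- rewrite -cst_int; apply: ge0_le_integral => //.
  + by move=> z _; exact: G0.
  + exact: measurable_funS GEm.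
  + by move=> z; rewrite /= in_itv /= => /andP[_ h2]; rewrite lee_fin Gnd.
Qed.
End Leb.

Unset Implicit Arguments.

Theorem proposition1 (R : realType) (a b : R) (ha : 0 < a) (hab : a < b)
  (D : set (set (Theta (ltW hab))) -> (set (Theta (ltW hab)) -> \bar R) ->
       (set (Theta (ltW hab)) -> \bar R) -> \bar R)
  (P : set (Theta (ltW hab)) -> \bar R) (eta : R)
  (x t : 'I_2 -> Theta (ltW hab) -> Theta (ltW hab) -> R) :
  divergence_wd D -> assumptionD D ->
  isProbOn (@BorelT R a b (ltW hab)) P -> atomless P -> 0 < eta ->
  allocation_rule x -> assumptionX D P eta x ->
  transfer_rule t -> win_lose_dependent x t ->
  (forall i th, Umin D P eta x t i th =
     (\int[lebesgue_measure]_(z in `[a, sval th])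
        Xmin D P eta x i (insubd (theta_lo (ltW hab)) z))%E) ->
  feasible D P eta x t.
Proof.
move=> Dwd DA hP Pal eta0 [[[xM xMb] hxm] hx] [_ _ Xmono] _ [tw [tl [ht htwl]]] hU.
set amb := ambiguity D P eta.
have x_ge0 i th y : 0 <= x i th y.
  case: i => [[|[|n]] Hi]; last by [].
    have -> : Ordinal Hi = ord0 by apply: val_inj.
    by case: (hx th y).
  have -> : Ordinal Hi = lift ord0 ord0 by apply: val_inj.
  by case: (hx y th).
have secm i th : measurable_fun setT (x i th : ThetaB (ltW hab) -> R).
  have := measurableT_comp (hxm i) (@pair1_measurable _ _ (ThetaB (ltW hab)) (ThetaB (ltW hab)) th).
  exact.
have EQx i th Q : amb Q -> exists r, [/\ EQ Q (x i th) = r%:E, 0 <= r &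
    forall k c, EQ Q (fun y => k * x i th y + c) = (k * r + c)%:E].
  move=> [hQ _].
  have [r [h1 h2]] := EQ_affine hQ (secm i th) (xMb i th).
  exists r; split => //.
  by rewrite -lee_fin -h1; apply: (EQ_ge0 hQ) => y; exact: x_ge0.
have Xmin0 i th : (0 <= Xmin D P eta x i th)%E.
  apply/ereal_infP => _ [Q [hQ _] <-]; apply: (EQ_ge0 hQ) => y; exact: x_ge0.
split; last first.
  move=> i th; rewrite hU; apply: integral_ge0 => z _; exact: Xmin0.
move=> i th thh.
change (Uhat D P eta x t i th thh <= Umin D P eta x t i th)%E.
have [[Q0 hQ0]|namb] := pselect (exists Q, amb Q); last first.
  have E : amb = set0 by apply/seteqP; split => Q // hQ; apply: namb; exists Q.
  by rewrite /Umin /Uhat /worst -/amb E !image_set0 ereal_inf0.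
have Xfin j th0 : Xmin D P eta x j th0 = (fine (Xmin D P eta x j th0))%:E.
  rewrite fineK // ge0_fin_numE //.
  have [r [h1 _ _]] := EQx j th0 Q0 hQ0.
  apply: (le_lt_trans (ereal_inf_lbound _)); first by exists Q0.
  by rewrite h1 ltry.
pose H := fun th0 => fine (Xmin D P eta x i th0).
have Hmono : forall th1 th2, sval th1 <= sval th2 -> H th1 <= H th2.
  move=> th1 th2 h12; rewrite /H -lee_fin -!Xfin; exact: Xmono.
have H0 : forall th1, 0 <= H th1.
  by move=> th1; rewrite /H -lee_fin -Xfin.
have hU' th0 : Umin D P eta x t i th0 =
    (\int[lebesgue_measure]_(z in `[a, sval th0]) (G H z)%:E)%E.
  rewrite hU -I_G; last by case/andP: (svalP th0).
  by apply: eq_integral => z _; rewrite Xfin.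
pose r Q := fine (EQ Q (x i thh)).
have hm : ereal_inf [set (r Q)%:E | Q in amb] = (H thh)%:E.
  rewrite /H -Xfin /Xmin /worst -/amb; congr ereal_inf; apply: eq_imagel => Q hQ.
  have [r0 [h1 _ _]] := EQx i thh Q hQ.
  by rewrite /r h1.
have rQ Q c k : amb Q -> EQ Q (fun y => k * x i thh y + c) = (k * r Q + c)%:E.
  move=> hQ; have [r0 [h1 _ h3]] := EQx i thh Q hQ.
  by rewrite h3 /r h1.
pose k := sval th - tw i thh + tl i thh.
pose c := sval thh - tw i thh + tl i thh.
have U1 : (Uhat D P eta x t i th thh <= (k * H thh + - tl i thh)%:E)%E.
  rewrite /Uhat /worst -/amb.
  have -> : (fun th' => sval th * x i thh th' - t i thh th') =
            (fun y => k * x i thh y + - tl i thh).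
    by apply: funext => y; rewrite ht /k; ring.
  rewrite (@eq_imagel _ _ amb (fun Q => EQ Q (fun y => k * x i thh y + - tl i thh))
     (fun Q => (k * r Q + - tl i thh)%:E)); last by move=> Q hQ; exact: rQ.
  exact: inf_affine_ub.
have U2 : ((c * H thh + - tl i thh)%:E <= Umin D P eta x t i thh)%E.
  rewrite /Umin /Uhat /worst -/amb.
  have -> : (fun th' => sval thh * x i thh th' - t i thh th') =
            (fun y => c * x i thh y + - tl i thh).
    by apply: funext => y; rewrite ht /c; ring.
  rewrite (@eq_imagel _ _ amb (fun Q => EQ Q (fun y => c * x i thh y + - tl i thh))
     (fun Q => (c * r Q + - tl i thh)%:E)); last by move=> Q hQ; exact: rQ.
  apply: inf_affine_lb.
    by have := htwl i thh; rewrite /c; lra.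
  move=> Q hQ; rewrite -lee_fin -hm; apply: ereal_inf_lbound; by exists Q.
have GH := G_th H thh.
have [hle|hlt] := leP (sval thh) (sval th).
  rewrite hU' (Isplit Hmono H0 (s := sval thh)) //; last by case/andP: (svalP thh).
  rewrite -hU'.
  have [L _] := Ibounds Hmono H0 hle.
  apply: (le_trans U1); rewrite GH in L.
  apply: le_trans (leeD U2 L); rewrite -EFinD lee_fin /k /c; lra.
have hlt' := ltW hlt.
move: U2; rewrite hU' (Isplit Hmono H0 (s := sval th)) //; last by case/andP: (svalP th).
rewrite -hU' => U2.
have [_ L] := Ibounds Hmono H0 hlt'.
rewrite GH in L.
have U3 := le_trans U2 (leeD (lexx _) L).
apply: (le_trans U1).
have -> : (k * H thh + - tl i thh)%:E =
   ((c * H thh + - tl i thh)%:E - ((sval thh - sval th) * H thh)%:E)%E.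
  by rewrite -EFinB /k /c; congr EFin; ring.
by rewrite leeBlDr.
Qed.
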